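(* Let $N\in\mathbb N$, let $T$ be an $N$-valid tree, and let $\tilde T$ and $\Gamma$ be the tree and digraph constructed from $T$ as described in the context. Let $m_0$ be a mask whose values $\lambda_{\mathbf c_1,\dots,\mathbf c_{N+1}}$ are compatible with $T$, and let $A^{(0)}=(a^{(0)}_{\mathbf i_1,\dots,\mathbf i_N})$ be the array $$a^{(0)}_{\mathbf i_1,\mathbf i_2,\dots,\mathbf i_N}=\lambda_{\mathbf i_1,\mathbf i_2,\dots,\mathbf i_N,\mathbf 0}\,\lambda_{\mathbf i_2,\dots,\mathbf i_N,\mathbf 0,\mathbf 0}\cdots\lambda_{\mathbf i_N,\mathbf 0,\dots,\mathbf 0}.$$ Then for every vertex $(\mathbf i_1,\dots,\mathbf i_N)$ of $\tilde T$ of level $l\le N$ one has $a^{(0)}_{\mathbf i_1,\dots,\mathbf i_N}=1$.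
   Context: Let $p$ be a prime, $s\in\mathbb N$, and $GF(p^s)$ the field with $p^s$ elements; each $\mathbf u\in GF(p^s)$ is identified with a vector $(u^{(0)},\dots,u^{(s-1)})\in\{0,\dots,p-1\}^s$ via a fixed basis over $GF(p)$, and $\mathbf 0$ denotes the zero element. The local field $F^{(s)}$ of characteristic $p$ is the field of formal Laurent series $\sum_{j\ge k}\mathbf x_j t^j$, $\mathbf x_j\in GF(p^s)$, identified with two-sided sequences $x=(\mathbf x_j)_{j\in\mathbb Z}$ having only finitely many nonzero $\mathbf x_j$ with $j<0$. For $\mathbf a\in GF(p^s)$ and $k\in\mathbb Z$, $\mathbf a g_k$ denotes the sequence with entry $\mathbf a$ at position $k$ and $\mathbf 0$ elsewhere. The dilation is $\mathcal A(\sum_n \mathbf x_n g_n)=\sum_n\mathbf x_n g_{n-1}$. For $\mathbf u\in GF(p^s)$, $k\in\mathbb Z$, the Rademacher character is $\mathbf r_k^{\mathbf u}(x)=\exp\big(\tfrac{2\pi i}{p}\sum_{l=0}^{s-1}u^{(l)}x_k^{(l)}\big)$. Every continuous character of the additive group of $F^{(s)}$ is uniquely $\chi=\prod_{k\in\mathbb Z}\mathbf r_k^{\mathbf b_k}$ with $\mathbf b_k=\mathbf 0$ for all sufficiently large $k$; write $(\chi,x)=\chi(x)$ and let $\chi\mathcal A^{j}$ be the character $x\mapsto\chi(\mathcal A^{j}x)$. For $\mathbf a_{-N},\dots,\mathbf a_0\in GF(p^s)$ let $C(\mathbf a_{-N},\dots,\mathbf a_0)$ be the set of characters $\prod_k\mathbf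 r_k^{\mathbf b_k}$ with $\mathbf b_k=\mathbf a_k$ for $-N\le k\le 0$ and $\mathbf b_k=\mathbf 0$ for $k\ge1$ (the coset $(F^{(s)}_{-N})^\perp\mathbf r_{-N}^{\mathbf a_{-N}}\cdots\mathbf r_0^{\mathbf a_0}$). Mask: let $H_0^{(N+1)}=\{\mathbf a_{-1}g_{-1}\dot+\cdots\dot+\mathbf a_{-(N+1)}g_{-(N+1)}:\mathbf a_i\in GF(p^s)\}$. A mask is a function $m_0(\chi)=\frac1p\sum_{h\in H_0^{(N+1)}}\beta_h\overline{(\chi\mathcal A^{-1},h)}$ with $\beta_h\in\mathbb C$; it is constant on each set $C(\mathbf a_{-N},\dots,\mathbf a_0)$, and we put $\lambda_{\mathbf a_{-N},\dots,\mathbf a_0}=|m_0(\chi)|^2$ for $\chi\in C(\mathbf a_{-N},\dots,\mathbf a_0)$ (an array indexed by $GF(p^s)^{N+1}$). Trees: consider a finite rooted tree $T$ whose vertices carry labels, with arcs directed from each non-root vertex to its parent; the level of a vertex is its distance to the root. $T$ is $N$-valid if (1) every label is an element of $GF(p^s)$; (2) the root and all vertices of levels $1,\dots,N-1$ have label $\mathbf 0$; (3) for every $(\mathbf c_1,\dots,\mathbf c_N)\in GF(p^s)^N$ there is exactly one directed path $v_1\to v_2\to\cdots\to v_N$ in $T$ ($v_{i+1}$ the parent of $v_i$) whose labels are $\mathbf c_1,\dots,\mathbf c_N$. The tree $\tilde T$ has as vertices the label tuples $(\mathbf c_1,\dots,\mathbf c_N)$ of such paths, with an arc from the tuple of the path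 starting at $v$ to the tuple of the path starting at the parent of $v$; its root is $(\mathbf 0,\dots,\mathbf 0)$ and the level of a tuple in $\tilde T$ equals (level of $v_1$ in $T$) $-(N-1)$. The digraph $\Gamma$ has the same vertices; for a vertex $B=(\mathbf b_1,\dots,\mathbf b_N)$ its successor set is $D(B)=\{\mathbf d\in GF(p^s): (\mathbf b_2,\dots,\mathbf b_N,\mathbf d)$ is a vertex of $\tilde T$ of level strictly less than the level of $B\}$, and $B$ is connected in $\Gamma$ to each $(\mathbf b_2,\dots,\mathbf b_N,\mathbf d)$, $\mathbf d\in D(B)$. The values $\lambda$ are compatible with $T$ if: $\lambda_{\mathbf 0,\dots,\mathbf 0}=1$ and $\lambda_{\mathbf 0,\dots,\mathbf 0,\mathbf d}=0$ for $\mathbf d\ne\mathbf 0$; and for every vertex $B=(\mathbf b_1,\dots,\mathbf b_N)\ne(\mathbf 0,\dots,\mathbf 0)$ of $\tilde T$, $\sum_{\mathbf d\in D(B)}\lambda_{\mathbf b_1,\dots,\mathbf b_N,\mathbf d}=1$ and $\lambda_{\mathbf b_1,\dots,\mathbf b_N,\mathbf d}=0$ for $\mathbf d\notin D(B)$. The component $a_{\mathbf i_1,\dots,\mathbf i_N}$ of an $N$-dimensional array is said to correspond to the vertex $(\mathbf i_1,\dots,\mathbf i_N)$. *)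

(* Defs.v *)
From HB Require Import structures.
From mathcomp Require Import all_boot all_order all_algebra.
From mathcomp Require Import complex.
From mathcomp Require Import reals trigo.
Set Implicit Arguments. Unset Strict Implicit. Unset Printing Implicit Defensive.
Import Order.TTheory GRing.Theory Num.Theory.
Local Open Scope ring_scope.

(* GF(p^s), identified (via a fixed basis over GF(p)) with row vectors of
   length s over 'F_p; the coordinate u^(l) is  val (u 0 l)  in {0,...,p-1}. *)
Definition GF (p s : nat) := 'rV['F_p]_s.

Section Tree.
Variables (p s : nat) (V : finType) (root : V) (par : V -> V) (lab : V -> GF p s).

(* (V, root, par) is a finite rooted tree: par v is the parent of v (par is
   only meaningful on non-root vertices; par root = root is a sentinel). *)
Definition is_rooted_tree : Prop :=
  par root = root /\ forall v : V, exists n : nat, iter n par v = root.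

Definition lev (v : V) : nat := find (fun n => iter n par v == root) (iota 0 #|V|).

Definition pathlab (N : nat) (v : V) : N.-tuple (GF p s) :=
  [tuple lab (iter i par v) | i < N].

(* such a path exists iff v_1, ..., v_{N-1} are non-root, i.e. lev v >= N-1 *)
Definition N_valid (N : nat) : Prop :=
  is_rooted_tree /\
  (forall v : V, (lev v <= N.-1)%N -> lab v = 0) /\
  (forall c : N.-tuple (GF p s), exists! v : V, (N.-1 <= lev v)%N /\ pathlab N v = c).

(* level of a vertex (c_1,...,c_N) of tilde T : (level of v_1 in T) - (N-1) *)
Definition tlev (N : nat) (c : N.-tuple (GF p s)) : nat :=
  match [pick v | ((N.-1 <= lev v)%N) && (pathlab N v == c)] with
  | Some v => (lev v - N.-1)%N
  | None => 0
  end.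

Definition tshift (N : nat) (B : N.-tuple (GF p s)) (d : GF p s) : N.-tuple (GF p s) :=
  [tuple nth 0 (rcons B d) j.+1 | j < N].

Definition inD (N : nat) (B : N.-tuple (GF p s)) (d : GF p s) : bool :=
  (tlev (tshift B d) < tlev B)%N.

Definition compatible (R : realType) (N : nat)
    (lam : N.+1.-tuple (GF p s) -> R) : Prop :=
  let z := [tuple (0 : GF p s) | _ < N] in
  lam [tuple of rcons z 0] = 1 /\
  (forall d : GF p s, d != 0 -> lam [tuple of rcons z d] = 0) /\
  (forall B : N.-tuple (GF p s), B != z ->
     \sum_(d | inD B d) lam [tuple of rcons B d] = 1 /\
     (forall d, ~~ inD B d -> lam [tuple of rcons B d] = 0)).

End Tree.

Section Mask.
Variables (R : realType) (p s N : nat).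
Local Open Scope complex_scope.

Definition expp (t : nat) : R[i] :=
  cos (2 * pi * t%:R / p%:R) +i* sin (2 * pi * t%:R / p%:R).

(* For chi in C(c_1,...,c_{N+1}) (i.e. b_{-N} = c_1, ..., b_0 = c_{N+1}) and
   h = a_{-1} g_{-1} + ... + a_{-(N+1)} g_{-(N+1)} (h = (a_{-1},...,a_{-(N+1)})),
   (chi A^{-1}, h) = exp(2 pi i/p * sum_{j=0}^{N} sum_l b_{-j}^(l) a_{-j-1}^(l)). *)
Definition char_phase (c h : N.+1.-tuple (GF p s)) : nat :=
  \sum_(j < N.+1) \sum_(l < s)
     (val (tnth c (rev_ord j) ord0 l) * val (tnth h j ord0 l))%N.

Definition mask (beta : N.+1.-tuple (GF p s) -> R[i]) (c : N.+1.-tuple (GF p s)) : R[i] :=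
  (p%:R)^-1 * \sum_(h : N.+1.-tuple (GF p s)) beta h * conjc (expp (char_phase c h)).

Definition mask_lambda (beta : N.+1.-tuple (GF p s) -> R[i]) (c : N.+1.-tuple (GF p s)) : R :=
  (ComplexField.Normc.normc (mask beta c)) ^+ 2.

End Mask.

Definition a0 (R : realType) (p s N : nat) (lam : N.+1.-tuple (GF p s) -> R)
    (c : N.-tuple (GF p s)) : R :=
  \prod_(k < N) lam [tuple nth 0 c (k + j)%N | j < N.+1].

(* Main.v *)
Require Import Defs.
From HB Require Import structures.
From mathcomp Require Import all_boot all_order all_algebra.
From mathcomp Require Import complex.
From mathcomp Require Import reals trigo.
From mathcomp Require Import zify.
Import Order.TTheory GRing.Theory Num.Theory.
Local Open Scope ring_scope.
Section Lev.
Variables (V : finType) (root : V) (par : V -> V).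
Hypothesis Htree : is_rooted_tree root par.

Lemma iter_root n : iter n par root = root.
Proof. by case: Htree => H _; elim: n => //= n ->. Qed.

Lemma lev_spec v : [/\ (lev root par v < #|V|)%N, iter (lev root par v) par v = root &
   forall k, (k < lev root par v)%N -> iter k par v != root].
Proof.
case: Htree => _ /(_ v) Hex.
have Hex' : exists n, iter n par v == root by case: Hex => n Hn; exists n; apply/eqP.
case: (ex_minnP Hex') => m /eqP Hm Hmin.
have Hnr : forall k, (k < m)%N -> iter k par v != root.
  move=> k Hk; apply/negP => /eqP Hk'. by have := Hmin k (introT eqP Hk'); rewrite leqNgt Hk.
have Hlt : (m < #|V|)%N.
  pose sq := map (fun i => iter i par v) (iota 0 m.+1).
  have Hu : uniq sq.
    rewrite map_inj_in_uniq ?iota_uniq // => i j.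
    rewrite !mem_iota !add0n /= => Hi Hj Hij.
    wlog lij : i j Hi Hj Hij / (i <= j)%N.
      by move=> W; case: (leqP i j) => h; [|symmetry]; apply: W => //; apply: ltnW.
    apply/eqP; rewrite eqn_leq lij /=; rewrite leqNgt; apply/negP => hij.
    have : iter (m - (j - i)) par v = root.
      have -> : (m - (j - i) = (m - j) + i)%N by rewrite subnBA ?leq_subr // ?subnK //; lia.
      by rewrite iterD Hij -iterD subnK // -ltnS.
    move/eqP; apply/negP; apply: Hnr; lia.
  have := card_uniqP Hu; rewrite size_map size_iota => <-.
  exact: max_card.
have -> : lev root par v = m.
  rewrite /lev.
  set P := (fun n => _).
  have Hhas : has P (iota 0 #|V|) by apply/hasP; exists m; rewrite ?mem_iota //; apply/eqP.
  have Hf := has_find P (iota 0 #|V|); rewrite Hhas size_iota in Hf.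
  have := nth_find 0 Hhas; rewrite nth_iota // add0n /P => /eqP Hfm.
  apply/eqP; rewrite eqn_leq; apply/andP; split; last by apply: Hmin; apply/eqP.
  rewrite leqNgt; apply/negP => Hlt2.
  have := before_find 0 Hlt2; rewrite nth_iota ?add0n //.
  by rewrite Hm eqxx.
by split.
Qed.

Lemma lev_unique u m : iter m par u = root -> (forall k, (k < m)%N -> iter k par u != root) ->
  lev root par u = m.
Proof.
move=> H1 H2; case: (lev_spec u) => _ H3 H4.
case: (ltngtP (lev root par u) m) => // h.
- by have := H2 _ h; rewrite H3 eqxx.
- by have := H4 _ h; rewrite H1 eqxx.
Qed.

Lemma lev_iter k v : lev root par (iter k par v) = (lev root par v - k)%N.
Proof.
case: (lev_spec v) => _ H3 H4.
case: (leqP k (lev root par v)) => hk.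
- apply: lev_unique; first by rewrite -iterD subnK.
  move=> k' hk'; rewrite -iterD; apply: H4; lia.
- have -> : iter k par v = root.
    have -> : k = ((k - lev root par v) + lev root par v)%N by rewrite subnK // ltnW.
    by rewrite iterD H3 iter_root.
  have -> : (lev root par v - k = 0)%N by lia.
  by apply: lev_unique.
Qed.
End Lev.
Section Tup.
Variables (p s : nat).
Local Notation G := (GF p s).

Lemma nth_mk (T : Type) (x0 : T) n (f : 'I_n -> T) i (h : (i < n)%N) :
  nth x0 [tuple f j | j < n] i = f (Ordinal h).
Proof. by rewrite -(tnth_nth x0 _ (Ordinal h)) tnth_mktuple. Qed.

Lemma nth_rcons0 (c : seq G) i : nth 0 (rcons c 0) i = nth 0 c i.
Proof.
rewrite nth_rcons; case: ltnP => // h; case: eqP => _; by rewrite nth_default.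
Qed.

Lemma nth_tshift0 N (c : N.-tuple G) i : nth 0 (tshift c 0) i = nth 0 c i.+1.
Proof.
case: (ltnP i N) => h.
  by rewrite /tshift nth_mk nth_rcons0.
by rewrite !nth_default ?size_tuple // ltnW.
Qed.

Lemma nth_z N i : nth 0 [tuple (0 : G) | _ < N] i = 0.
Proof.
case: (ltnP i N) => h; first by rewrite nth_mk.
by rewrite nth_default ?size_tuple.
Qed.

Lemma a0_rec (R : realType) N (lam : N.+1.-tuple G -> R) (c : N.-tuple G) :
  (0 < N)%N -> lam [tuple of rcons [tuple (0 : G) | _ < N] 0] = 1 ->
  a0 lam c = lam [tuple of rcons c 0] * a0 lam (tshift c 0).
Proof.
case: N lam c => // n lam c _ Hz.
rewrite /a0 big_ord_recl [in RHS]big_ord_recr.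
have -> : lam [tuple nth 0 (tshift c 0) (n + j)%N | j < n.+2] = 1.
  rewrite -Hz; apply: (congr1 lam); apply: eq_from_tnth => j.
  rewrite tnth_mktuple (tnth_nth 0) nth_tshift0.
  rewrite [X in _ = X]nth_rcons0 nth_z nth_default // size_tuple /=; lia.
rewrite Monoid.mulm1; congr (_ * _).
  apply: (congr1 lam); apply: eq_from_tnth => j; rewrite tnth_mktuple (tnth_nth 0).
  by rewrite nth_rcons0.
apply: eq_bigr => i _; apply: (congr1 lam); apply: eq_from_tnth => j; rewrite !tnth_mktuple.
by rewrite nth_tshift0 /bump /= addSn.
Qed.

Lemma a0_z (R : realType) N (lam : N.+1.-tuple G -> R) :
  lam [tuple of rcons [tuple (0 : G) | _ < N] 0] = 1 ->
  a0 lam [tuple (0 : G) | _ < N] = 1.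
Proof.
move=> Hz; rewrite /a0 big1 // => k _; rewrite -Hz; congr lam.
apply: eq_from_tnth => j; rewrite tnth_mktuple (tnth_nth 0) /=.
by rewrite nth_rcons0 !nth_z.
Qed.
End Tup.
Section Main.
Variables (R : realType) (p s n : nat) (V : finType) (root : V) (par : V -> V)
  (lab : V -> GF p s).
Local Notation G := (GF p s).
Hypothesis T_valid : N_valid root par lab n.+1.
Variable lam : n.+2.-tuple G -> R.
Hypothesis compat : compatible root par lab lam.

Let Htree : is_rooted_tree root par := T_valid.1.
Let Hlab : forall v, (lev root par v <= n)%N -> lab v = 0 := T_valid.2.1.
Let Huniq := T_valid.2.2.

Lemma tlev_eq v : (n <= lev root par v)%N ->
  tlev root par lab (pathlab par lab n.+1 v) = (lev root par v - n)%N.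
Proof.
move=> hv; rewrite /tlev; case: pickP => [u /andP [hu /eqP hpu] | H].
  case: (Huniq (pathlab par lab n.+1 v)) => w [_ Hw].
  by rewrite -(Hw u (conj hu hpu)) -(Hw v (conj hv erefl)).
by have := H v; rewrite /= hv eqxx.
Qed.

Let z := [tuple (0 : G) | _ < n.+1].

Lemma step c : c != z -> (tlev root par lab c <= n.+1)%N ->
  [/\ (0 < tlev root par lab c)%N,
      tlev root par lab (tshift c 0) = (tlev root par lab c).-1 &
      lam [tuple of rcons c 0] = 1].
Proof.
move=> Hcz HN.
case: (Huniq c) => v [[hv pv] _].
have tc : tlev root par lab c = (lev root par v - n)%N by rewrite -pv tlev_eq.
have hL : (n < lev root par v)%N.
  rewrite ltn_neqAle hv andbT; apply/negP => /eqP hL.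
  move/negP: Hcz; apply; apply/eqP; apply: eq_from_tnth => i.
  rewrite -pv !tnth_mktuple; apply: Hlab; rewrite lev_iter // -hL; lia.
have sh : tshift c 0 = pathlab par lab n.+1 (par v).
  apply: eq_from_tnth => j; rewrite /tshift !tnth_mktuple -iterSr nth_rcons0.
  case: (ltnP j.+1 n.+1) => h.
    by rewrite -pv nth_mk.
  rewrite nth_default ?size_tuple //; symmetry; apply: Hlab; rewrite lev_iter //.
  rewrite tc in HN; lia.
have lp : lev root par (par v) = (lev root par v).-1.
  by have := @lev_iter _ _ _ Htree 1 v; rewrite /= subn1.
have ts : tlev root par lab (tshift c 0) = (tlev root par lab c).-1.
  rewrite sh tlev_eq lp ?tc; lia.
have pos : (0 < tlev root par lab c)%N by rewrite tc; lia.
split => //.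
case: compat => _ [_ /(_ c Hcz) [Hsum _]].
rewrite (big_pred1 (0 : G)) in Hsum => // d /=.
case: (eqVneq d 0) => [-> | hd].
  by rewrite /inD ts; lia.
apply/negP => hin.
case: (Huniq (tshift c d)) => w [[hw pw] _].
move: hin; rewrite /inD -pw tlev_eq // => hin.
have : tnth (tshift c d) (Ordinal (ltnSn n)) = d.
  by rewrite /tshift tnth_mktuple nth_rcons size_tuple ltnn eqxx.
rewrite -pw tnth_mktuple Hlab => [hd0|].
  by move: hd; rewrite -hd0 eqxx.
rewrite lev_iter //=; lia.
Qed.

Lemma main_gen c : (tlev root par lab c <= n.+1)%N -> a0 lam c = 1.
Proof.
have Hz : lam [tuple of rcons z 0] = 1 by case: compat.
move: {2}(tlev root par lab c) (leqnn (tlev root par lab c)) => m.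
elim: m c => [|m IH] c Hm HN.
  case: (eqVneq c z) => [-> | hcz]; first by apply: a0_z.
  by case: (step c hcz HN); rewrite leqn0 in Hm; rewrite (eqP Hm).
case: (eqVneq c z) => [-> | hcz]; first by apply: a0_z.
case: (step c hcz HN) => h1 h2 h3.
rewrite (@a0_rec p s R n.+1 lam c) // h3 mul1r; apply: IH; rewrite h2; lia.
Qed.
End Main.

Theorem lemma4p1 (R : realType) (p s N : nat) (p_prime : prime p) (s_pos : (0 < s)%N)
    (N_pos : (0 < N)%N)
    (V : finType) (root : V) (par : V -> V) (lab : V -> GF p s)
    (T_valid : N_valid root par lab N)
    (beta : N.+1.-tuple (GF p s) -> R[i])
    (compat : compatible root par lab (mask_lambda beta)) :
  forall c : N.-tuple (GF p s), (tlev root par lab c <= N)%N ->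
    a0 (mask_lambda beta) c = 1.
Proof.
destruct N as [|n]; first by [].
exact: main_gen.
Qed.
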